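(* Let $n\in\mathbb{N}$, let $p_1,\ldots,p_n\in\mathbb{H}$ with $p_n\neq 0$, let $d_0\in\{0,1\}$, and consider the equation $$p_nx^n+\cdots+p_1x+d_0=0,\qquad x\in\mathbb{H}.$$ Write $p_i=t_1^{(i)}+t_2^{(i)}\mathbf{j}$ with $t_1^{(i)},t_2^{(i)}\in\mathbb{C}$ ($i=1,\ldots,n$), and define the derived polynomials (in a complex variable $t$) $$f_1(t)=t_1^{(n)}t^n+\cdots+t_1^{(1)}t+d_0,\qquad f_2(t)=t_2^{(n)}t^n+\cdots+t_2^{(1)}t,$$ $$\bar f_1(t)=\overline{t_1^{(n)}}t^n+\cdots+\overline{t_1^{(1)}}t+d_0,\qquad \bar f_2(t)=\overline{t_2^{(n)}}t^n+\cdots+\overline{t_2^{(1)}}t,$$ and the discriminant polynomial $\tilde p(t)=f_1(t)\bar f_1(t)+f_2(t)\bar f_2(t)$, which has real coefficients. Let $\xi_1,\ldots,\xi_s$ be the distinct real roots of $\tilde p$, and let the distinct nonreal roots of $\tilde p$ be $\eta_1,\overline{\eta_1},\ldots,\eta_k,\overline{\eta_k}$ (one representative $\eta_i$ chosen from each conjugate pair). Put $$T_1=\{\eta\in\{\eta_1,\ldots,\eta_k\}: f_1(\eta)=f_2(\eta)=\bar f_1(\eta)=\bar f_2(\eta)=0\},\qquad T_2=\{\eta_1,\ldots,\eta_k\}\setminus T_1.$$ Then the solution set of the equation in $\mathbb{H}$ is the disjoint union $$\{\xi_1,\ldots,\xi_s\}\ \dot\cup\ \dot{\bigcup_{\eta_i\in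 T_2}}\{\omega_i\}\ \dot\cup\ \dot{\bigcup_{\eta_i\in T_1}}[\eta_i],$$ where, if $|f_1(\eta_i)|^2+|f_2(\eta_i)|^2\neq 0$, $$\omega_i=\frac{1}{|f_1(\eta_i)|^2+|f_2(\eta_i)|^2}\Big\{|f_2(\eta_i)|^2\eta_i+|f_1(\eta_i)|^2\overline{\eta_i}-2f_2(\eta_i)\overline{f_1(\eta_i)}(\operatorname{Im}\eta_i)\mathbf{k}\Big\},$$ and otherwise $$\omega_i=\frac{1}{|f_1(\overline{\eta_i})|^2+|f_2(\overline{\eta_i})|^2}\Big\{|f_1(\overline{\eta_i})|^2\eta_i+|f_2(\overline{\eta_i})|^2\overline{\eta_i}+2f_2(\overline{\eta_i})\overline{f_1(\overline{\eta_i})}(\operatorname{Im}\eta_i)\mathbf{k}\Big\}.$$ Here $\operatorname{Im}\eta_i$ is the (real) imaginary part of $\eta_i$. Moreover, $\{\xi_1,\ldots,\xi_s\}\cup\bigcup_{\eta_i\in T_2}\{\omega_i\}$ is exactly the set of isolated zeros and $\bigcup_{\eta_i\in T_1}[\eta_i]$ is exactly the set of spherical zeros of $p(x)=p_nx^n+\cdots+p_1x+d_0$.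
   Context: $\mathbb{H}$ denotes the real quaternions with units $\mathbf{i},\mathbf{j},\mathbf{k}$ ($\mathbf{i}^2=\mathbf{j}^2=\mathbf{k}^2=-1$, $\mathbf{ij}=-\mathbf{ji}=\mathbf{k}$, etc.), and $\mathbb{C}=\mathbb{R}\oplus\mathbb{R}\mathbf{i}\subset\mathbb{H}$. For $q\in\mathbb{H}$, $[q]=\{aqa^{-1}: a\in\mathbb{H}, a\neq 0\}$ is its conjugacy class. For a complex number $z$, $|z|$ is its modulus and $\bar z$ its complex conjugate. A zero $z_0$ of a polynomial $p(x)=\sum p_ix^i$ (coefficients on the left) is called spherical if $z_0$ is not real and $p(z)=0$ for all $z\in[z_0]$; a zero that is real or not spherical is called isolated. *)

(* Defs.v *)
From HB Require Import structures.
From mathcomp Require Import all_boot all_order all_algebra.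
From mathcomp Require Import complex.
From mathcomp Require Import ring.

Set Implicit Arguments.
Unset Strict Implicit.
Unset Printing Implicit Defensive.
Import Order.TTheory GRing.Theory Num.Theory.
Local Open Scope ring_scope.

Record quat (R : Type) : Type := Quat { qa : R; qb : R; qc : R; qd : R }.
(* Quat a b c d  stands for  a + b i + c j + d k. *)

Module QuatEqChoice.
Section S.
Variable R : Type.
Definition seq_of_quat (q : quat R) := let: Quat a b c d := q in [:: a; b; c; d].
Definition quat_of_seq (s : seq R) :=
  if s is [:: a; b; c; d] then Some (Quat a b c d) else None.
Lemma quat_of_seqK : pcancel seq_of_quat quat_of_seq. Proof. by case. Qed.
End S.
End QuatEqChoice.

HB.instance Definition _ (R : eqType) := Equality.copy (quat R)
  (pcan_type (@QuatEqChoice.quat_of_seqK R)).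
HB.instance Definition _ (R : choiceType) := Choice.copy (quat R)
  (pcan_type (@QuatEqChoice.quat_of_seqK R)).

Section QuatRing.
Variable R : comNzRingType.
Local Notation H := (quat R).

Definition qadd (x y : H) := Quat (qa x + qa y) (qb x + qb y) (qc x + qc y) (qd x + qd y).
Definition qopp (x : H) := Quat (- qa x) (- qb x) (- qc x) (- qd x).
Definition qzero : H := Quat 0 0 0 0.

Lemma qaddA : associative qadd.
Proof. by move=> [? ? ? ?] [? ? ? ?] [? ? ? ?]; rewrite /qadd /=; congr Quat; ring. Qed.
Lemma qaddC : commutative qadd.
Proof. by move=> [? ? ? ?] [? ? ? ?]; rewrite /qadd /=; congr Quat; ring. Qed.
Lemma qadd0 : left_id qzero qadd.
Proof. by move=> [? ? ? ?]; rewrite /qadd /=; congr Quat; ring. Qed.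
Lemma qaddN : left_inverse qzero qopp qadd.
Proof. by move=> [? ? ? ?]; rewrite /qadd /=; congr Quat; ring. Qed.

HB.instance Definition _ := GRing.isZmodule.Build H qaddA qaddC qadd0 qaddN.

(* Hamilton product: i^2 = j^2 = k^2 = -1, ij = -ji = k, jk = -kj = i, ki = -ik = j *)
Definition qmul (x y : H) :=
  let: Quat a1 b1 c1 d1 := x in let: Quat a2 b2 c2 d2 := y in
  Quat (a1 * a2 - b1 * b2 - c1 * c2 - d1 * d2)
       (a1 * b2 + b1 * a2 + c1 * d2 - d1 * c2)
       (a1 * c2 - b1 * d2 + c1 * a2 + d1 * b2)
       (a1 * d2 + b1 * c2 - c1 * b2 + d1 * a2).
Definition qone : H := Quat 1 0 0 0.

Lemma qmulA : associative qmul.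
Proof. by move=> [? ? ? ?] [? ? ? ?] [? ? ? ?]; rewrite /qmul /=; congr Quat; ring. Qed.
Lemma qmul1 : left_id qone qmul.
Proof. by move=> [? ? ? ?]; rewrite /qmul /=; congr Quat; ring. Qed.
Lemma qmulr1 : right_id qone qmul.
Proof. by move=> [? ? ? ?]; rewrite /qmul /=; congr Quat; ring. Qed.
Lemma qmulDl : left_distributive qmul +%R.
Proof.
move=> x y z; change (qmul (qadd x y) z = qadd (qmul x z) (qmul y z)).
by case: x y z => [? ? ? ?] [? ? ? ?] [? ? ? ?]; rewrite /qmul /= /qadd /=; congr Quat; ring.
Qed.
Lemma qmulDr : right_distributive qmul +%R.
Proof.
move=> x y z; change (qmul x (qadd y z) = qadd (qmul x y) (qmul x z)).
by case: x y z => [? ? ? ?] [? ? ? ?] [? ? ? ?]; rewrite /qmul /= /qadd /=; congr Quat; ring.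
Qed.
Lemma qone_neq0 : qone != 0.
Proof. by apply/eqP => -[/eqP]; rewrite oner_eq0. Qed.

HB.instance Definition _ := GRing.Zmodule_isNzRing.Build H
  qmulA qmul1 qmulr1 qmulDl qmulDr qone_neq0.

Definition qi : H := Quat 0 1 0 0.
Definition qj : H := Quat 0 0 1 0.
Definition qk : H := Quat 0 0 0 1.

End QuatRing.

Section QuatField.
Variable R : rcfType.
Local Notation H := (quat R).

Definition qinv (q : H) : H :=
  let n2 := qa q ^+ 2 + qb q ^+ 2 + qc q ^+ 2 + qd q ^+ 2 in
  Quat (qa q / n2) (- qb q / n2) (- qc q / n2) (- qd q / n2).

Definition qclass (q : H) (y : H) : Prop :=
  exists2 a : H, a != 0 & y = a * q * qinv a.

Definition qreal (q : H) : Prop := [/\ qb q = 0, qc q = 0 & qd q = 0].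

Definition qofC (z : R[i]) : H := Quat (complex.Re z) (complex.Im z) 0 0.

Definition qhorner (n : nat) (c : nat -> H) (x : H) : H :=
  \sum_(i < n.+1) c i * x ^+ i.

Definition qzero_of (n : nat) (c : nat -> H) (z : H) : Prop := qhorner n c z = 0.
Definition spherical_zero (n : nat) (c : nat -> H) (z : H) : Prop :=
  ~ qreal z /\ (forall w, qclass z w -> qhorner n c w = 0).
Definition isolated_zero (n : nat) (c : nat -> H) (z : H) : Prop :=
  qzero_of n c z /\ ~ spherical_zero n c z.

(* the decomposition  q = t1 + t2 j  with t1, t2 in C:
   a + b i + c j + d k = (a + b i) + (c + d i) j *)
Definition qt1 (q : H) : R[i] := Complex (qa q) (qb q).
Definition qt2 (q : H) : R[i] := Complex (qc q) (qd q).

(* The data of the theorem: coefficients p_1..p_n (p : nat -> H, p 0 unused)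
   and constant term d0 (a real number). *)
Definition qcoefs (p : nat -> H) (d0 : R) (i : nat) : H :=
  if i == 0%N then Quat d0 0 0 0 else p i.

Definition f1 (n : nat) (p : nat -> H) (d0 : R) : {poly R[i]} :=
  \poly_(i < n.+1) (if i == 0%N then Complex d0 0 else qt1 (p i)).
Definition f2 (n : nat) (p : nat -> H) : {poly R[i]} :=
  \poly_(i < n.+1) (if i == 0%N then 0 else qt2 (p i)).
Definition f1bar (n : nat) (p : nat -> H) (d0 : R) : {poly R[i]} :=
  \poly_(i < n.+1) (if i == 0%N then Complex d0 0 else conjc (qt1 (p i))).
Definition f2bar (n : nat) (p : nat -> H) : {poly R[i]} :=
  \poly_(i < n.+1) (if i == 0%N then 0 else conjc (qt2 (p i))).

Definition ptilde (n : nat) (p : nat -> H) (d0 : R) : {poly R[i]} :=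
  f1 n p d0 * f1bar n p d0 + f2 n p * f2bar n p.

Definition csq (z : R[i]) : R[i] := z * conjc z.

Definition omega (n : nat) (p : nat -> H) (d0 : R) (eta : R[i]) : H :=
  let F1 := (f1 n p d0).[eta] in let F2 := (f2 n p).[eta] in
  let G1 := (f1 n p d0).[conjc eta] in let G2 := (f2 n p).[conjc eta] in
  let imeta : R[i] := Complex (complex.Im eta) 0 in
  let two : R[i] := 2 in
  if csq F1 + csq F2 != 0 then
    qofC ((csq F1 + csq F2)^-1 * (csq F2 * eta + csq F1 * conjc eta))
    - qofC ((csq F1 + csq F2)^-1 * (two * F2 * conjc F1 * imeta)) * qk R
  else
    qofC ((csq G1 + csq G2)^-1 * (csq G1 * eta + csq G2 * conjc eta))
    + qofC ((csq G1 + csq G2)^-1 * (two * G2 * conjc G1 * imeta)) * qk R.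

Definition inT1 (n : nat) (p : nat -> H) (d0 : R) (eta : R[i]) : Prop :=
  [/\ (f1 n p d0).[eta] = 0, (f2 n p).[eta] = 0,
      (f1bar n p d0).[eta] = 0 & (f2bar n p).[eta] = 0].

(* the three pieces of the solution set, given the list S = [eta_1;...;eta_k]
   of chosen representatives of the nonreal roots of ptilde *)
Definition part_real (n : nat) (p : nat -> H) (d0 : R) (x : H) : Prop :=
  exists xi : R, root (ptilde n p d0) (Complex xi 0) /\ x = Quat xi 0 0 0.
Definition part_omega (n : nat) (p : nat -> H) (d0 : R) (S : seq R[i]) (x : H) : Prop :=
  exists2 eta, eta \in S & ~ inT1 n p d0 eta /\ x = omega n p d0 eta.
Definition part_sphere (n : nat) (p : nat -> H) (d0 : R) (S : seq R[i]) (x : H) : Prop :=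
  exists2 eta, eta \in S & inT1 n p d0 eta /\ qclass (qofC eta) x.

Definition nonreal_reps (P : {poly R[i]}) (S : seq R[i]) : Prop :=
  [/\ uniq S,
      (forall eta, eta \in S -> root P eta /\ complex.Im eta != 0),
      (forall eta, eta \in S -> conjc eta \notin S) &
      (forall z, root P z -> complex.Im z != 0 -> z \in S \/ conjc z \in S)].

End QuatField.

(* Main.v *)
Require Import Defs.
From HB Require Import structures.
From mathcomp Require Import all_boot all_order all_algebra.
From mathcomp Require Import complex.
From mathcomp Require Import ring lra.
From Stdlib Require Import Classical_Prop.
Import Order.TTheory GRing.Theory Num.Theory.
Local Open Scope ring_scope.
Local Open Scope complex_scope.
Set Implicit Arguments.
Unset Strict Implicit.


Section Basic.
Variable R : rcfType.
Local Notation H := (quat R).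
Local Notation C := (R[i]).
Implicit Types (x y : H) (z u v : C).
Definition q2 (u v : C) : H := Quat (complex.Re u) (complex.Im u) (complex.Re v) (complex.Im v).
Definition qr (r : R) : H := Quat r 0 0 0.
Definition qN (x : H) : R := qa x ^+ 2 + qb x ^+ 2 + qc x ^+ 2 + qd x ^+ 2.
Definition cN (z : C) : R := complex.Re z ^+ 2 + complex.Im z ^+ 2.

Lemma q2E (x : H) : x = q2 (qt1 x) (qt2 x). Proof. by case: x. Qed.
Lemma qt1_q2 u v : qt1 (q2 u v) = u. Proof. by case: u. Qed.
Lemma qt2_q2 u v : qt2 (q2 u v) = v. Proof. by case: v. Qed.
Lemma q2M u v u' v' : q2 u v * q2 u' v' = q2 (u*u' - v * conjc v') (u*v' + v * conjc u').
Proof.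
case: u => a b; case: v => c d; case: u' => e f; case: v' => g h.
rewrite /GRing.mul /=.
rewrite /qmul /=. congr Quat; simpc; rewrite /=; ring.
Qed.
Lemma q2D u v u' v' : q2 u v + q2 u' v' = q2 (u+u') (v+v').
Proof.
case: u => a b; case: v => c d; case: u' => e f; case: v' => g h.
rewrite /GRing.add /=. by [].
Qed.
Lemma q2N u v : - q2 u v = q2 (-u) (-v).
Proof. case: u => a b; case: v => c d. by []. Qed.
Lemma q2B u v u' v' : q2 u v - q2 u' v' = q2 (u-u') (v-v').
Proof. by rewrite q2N q2D. Qed.
Lemma q20 : q2 0 0 = 0. Proof. by []. Qed.
Lemma q2_eq0 u v : q2 u v = 0 -> u = 0 /\ v = 0.
Proof. case: u => a b; case: v => c d. by case=> -> -> -> ->. Qed.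
Lemma qr_q2 r : qr r = q2 r%:C 0. Proof. by []. Qed.
Lemma qofC_q2 z : qofC z = q2 z 0. Proof. by case: z. Qed.
Lemma qk_q2 : qk R = q2 0 'i%C. Proof. by []. Qed.
Lemma qt1D x y : qt1 (x + y) = qt1 x + qt1 y. Proof. by case: x; case: y. Qed.
Lemma qt2D x y : qt2 (x + y) = qt2 x + qt2 y. Proof. by case: x; case: y. Qed.
Lemma qt10 : @qt1 R (0 : H) = 0. Proof. by []. Qed.
Lemma qt20 : @qt2 R (0 : H) = 0. Proof. by []. Qed.
Lemma qt1_sum m (F : 'I_m -> H) : qt1 (\sum_(i < m) F i) = \sum_(i < m) qt1 (F i).
Proof. exact: (big_morph _ qt1D qt10). Qed.
Lemma qt2_sum m (F : 'I_m -> H) : qt2 (\sum_(i < m) F i) = \sum_(i < m) qt2 (F i).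
Proof. exact: (big_morph _ qt2D qt20). Qed.
Lemma qt1_mulr x r : qt1 (x * qr r) = qt1 x * r%:C.
Proof. by rewrite [x]q2E qr_q2 q2M qt1_q2 -!q2E conjc0 mulr0 subr0. Qed.
Lemma qt2_mulr x r : qt2 (x * qr r) = qt2 x * r%:C.
Proof. by rewrite [x]q2E qr_q2 q2M qt2_q2 -!q2E conjc_real mulr0 add0r. Qed.
Lemma qrD (u v : R) : qr (u + v) = qr u + qr v.
Proof. rewrite -[qr u + qr v]/(qadd (qr u) (qr v)) /qr /qadd /=; congr Quat; ring. Qed.
Lemma qrM (u v : R) : qr (u * v) = qr u * qr v.
Proof. rewrite -[qr u * qr v]/(qmul (qr u) (qr v)) /qr /qmul /=; congr Quat; ring. Qed.
Lemma qrN (u : R) : qr (- u) = - qr u.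
Proof. rewrite -[- qr u]/(qopp (qr u)) /qr /qopp /=; congr Quat; ring. Qed.
Lemma qr0 : qr 0 = 0. Proof. by []. Qed.
Lemma qr1 : qr 1 = 1. Proof. by []. Qed.

Lemma qsq (x : H) : x * x = qr (2 * qa x) * x - qr (qN x).
Proof.
case: x => a b c d.
rewrite -[_ * _]/(qmul _ _) -[qr _ * _]/(qmul _ _) -[_ - _]/(qadd _ (qopp _)).
rewrite /qmul /qadd /qopp /qr /qN /=; congr Quat; ring.
Qed.
Lemma csq_quad (z : C) : z * z = (2 * complex.Re z)%:C * z - (cN z)%:C.
Proof. case: z => a b. rewrite /cN /=. simpc. rewrite /=. congr Complex; ring. Qed.

Fixpoint AB (a N : R) (k : nat) : R * R :=
  match k with 0 => (0, 1) | k'.+1 => let: (A, B) := AB a N k' in (A * (2 * a) + B, - (A * N)) end.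
Definition Aq a N k := (AB a N k).1.
Definition Bq a N k := (AB a N k).2.

Lemma powAB (T : nzRingType) (f : R -> T)
  (fD : forall u v : R, f (u + v) = f u + f v) (fM : forall u v : R, f (u * v) = f u * f v)
  (fN : forall u : R, f (- u) = - f u) (f0 : f 0 = 0) (f1 : f 1 = 1) (a N : R) (x : T) :
  x * x = f (2 * a) * x - f N -> forall k, x ^+ k = f (Aq a N k) * x + f (Bq a N k).
Proof.
move=> hx; elim=> [|k IH]; first by rewrite /Aq /Bq /= f0 f1 mul0r add0r.
rewrite exprSr IH /Aq /Bq /=; case: (AB a N k) => A B /=.
rewrite mulrDl -mulrA hx fD fN !fM mulrBr !mulrA mulrDl addrAC //.
Qed.
End Basic.


Section Poly.
Variable R : rcfType.
Local Notation H := (quat R).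
Local Notation C := (R[i]).
Implicit Types (x y : H) (z u v w : C).
Variables (n : nat) (p : nat -> H) (d0 : R).
Local Notation c := (qcoefs p d0).

Definition Pq (a N : R) : H := \sum_(i < n.+1) c i * qr (Aq a N i).
Definition Qq (a N : R) : H := \sum_(i < n.+1) c i * qr (Bq a N i).

Lemma qhornerE x : qhorner n c x = Pq (qa x) (qN x) * x + Qq (qa x) (qN x).
Proof.
rewrite /qhorner.
under eq_bigr do rewrite (powAB (@qrD R) (@qrM R) (@qrN R) (qr0 R) (qr1 R) (qsq x)).
rewrite /Pq /Qq mulr_suml -big_split /=.
by apply: eq_bigr => i _; rewrite mulrDr mulrA.
Qed.

Lemma polyE (E : nat -> C) (a N : R) w :
  w * w = (2 * a)%:C * w - N%:C ->
  (\poly_(i < n.+1) E i).[w] =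
    (\sum_(i < n.+1) E i * (Aq a N i)%:C) * w + \sum_(i < n.+1) E i * (Bq a N i)%:C.
Proof.
move=> hw; rewrite horner_poly.
have fD := @rmorphD R C (real_complex R).
have fM := @rmorphM R C (real_complex R).
have fN := @rmorphN R C (real_complex R).
under eq_bigr do rewrite (powAB fD fM fN (rmorph0 _) (rmorph1 _) hw).
rewrite mulr_suml -big_split /=.
by apply: eq_bigr => i _; rewrite mulrDr mulrA.
Qed.

Lemma qt1P a N : qt1 (Pq a N) = \sum_(i < n.+1) qt1 (c i) * (Aq a N i)%:C.
Proof. by rewrite qt1_sum; apply: eq_bigr => i _; rewrite qt1_mulr. Qed.
Lemma qt1Q a N : qt1 (Qq a N) = \sum_(i < n.+1) qt1 (c i) * (Bq a N i)%:C.
Proof. by rewrite qt1_sum; apply: eq_bigr => i _; rewrite qt1_mulr. Qed.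
Lemma qt2P a N : qt2 (Pq a N) = \sum_(i < n.+1) qt2 (c i) * (Aq a N i)%:C.
Proof. by rewrite qt2_sum; apply: eq_bigr => i _; rewrite qt2_mulr. Qed.
Lemma qt2Q a N : qt2 (Qq a N) = \sum_(i < n.+1) qt2 (c i) * (Bq a N i)%:C.
Proof. by rewrite qt2_sum; apply: eq_bigr => i _; rewrite qt2_mulr. Qed.

Lemma f1_poly : f1 n p d0 = \poly_(i < n.+1) qt1 (c i).
Proof. by apply: eq_poly => -[|i] _. Qed.
Lemma f2_poly : f2 n p = \poly_(i < n.+1) qt2 (c i).
Proof. by apply: eq_poly => -[|i] _. Qed.
Lemma f1bar_poly : f1bar n p d0 = \poly_(i < n.+1) conjc (qt1 (c i)).
Proof. apply: eq_poly => -[|i] _ //=. by rewrite /= oppr0. Qed.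
Lemma f2bar_poly : f2bar n p = \poly_(i < n.+1) conjc (qt2 (c i)).
Proof. apply: eq_poly => -[|i] _ //=. by rewrite /= oppr0. Qed.

Variables (a N : R) (w : C).
Hypothesis hw : w * w = (2 * a)%:C * w - N%:C.
Local Notation P1 := (qt1 (Pq a N)).
Local Notation P2 := (qt2 (Pq a N)).
Local Notation Q1 := (qt1 (Qq a N)).
Local Notation Q2 := (qt2 (Qq a N)).

Lemma f1E : (f1 n p d0).[w] = P1 * w + Q1.
Proof. by rewrite f1_poly (polyE _ hw) qt1P qt1Q. Qed.
Lemma f2E : (f2 n p).[w] = P2 * w + Q2.
Proof. by rewrite f2_poly (polyE _ hw) qt2P qt2Q. Qed.
Lemma f1barE : (f1bar n p d0).[w] = conjc P1 * w + conjc Q1.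
Proof.
rewrite f1bar_poly (polyE _ hw) qt1P qt1Q !rmorph_sum.
by congr (_ * _ + _); apply: eq_bigr => i _; rewrite rmorphM; congr (_ * _); rewrite -[in LHS]conjc_real.
Qed.
Lemma f2barE : (f2bar n p).[w] = conjc P2 * w + conjc Q2.
Proof.
rewrite f2bar_poly (polyE _ hw) qt2P qt2Q !rmorph_sum.
by congr (_ * _ + _); apply: eq_bigr => i _; rewrite rmorphM; congr (_ * _); rewrite -[in LHS]conjc_real.
Qed.
Lemma ptildeE : (ptilde n p d0).[w] =
  (P1 * w + Q1) * (conjc P1 * w + conjc Q1) + (P2 * w + Q2) * (conjc P2 * w + conjc Q2).
Proof. by rewrite /ptilde hornerD !hornerM f1E f2E f1barE f2barE. Qed.
End Poly.


Section Cls.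
Variable R : rcfType.
Local Notation H := (quat R).
Local Notation C := (R[i]).
Implicit Types (x y g q : H) (z u v w : C).

Lemma qN_eq0 x : qN x = 0 -> x = 0.
Proof.
case: x => a b c d; rewrite /qN /= => h.
have ha : a ^+ 2 = 0 by apply/eqP; move/eqP: h; rewrite !paddr_eq0 ?addr_ge0 ?sqr_ge0 // => /andP[/andP[/andP[]]].
have hb : b ^+ 2 = 0 by apply/eqP; move/eqP: h; rewrite !paddr_eq0 ?addr_ge0 ?sqr_ge0 // => /andP[/andP[/andP[]]].
have hc : c ^+ 2 = 0 by apply/eqP; move/eqP: h; rewrite !paddr_eq0 ?addr_ge0 ?sqr_ge0 // => /andP[/andP[]].
have hd : d ^+ 2 = 0 by apply/eqP; move/eqP: h; rewrite !paddr_eq0 ?addr_ge0 ?sqr_ge0 // => /andP[].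
by move/eqP: ha; move/eqP: hb; move/eqP: hc; move/eqP: hd; rewrite !sqrf_eq0 => /eqP-> /eqP-> /eqP-> /eqP->.
Qed.

Lemma qN_neq0 x : x != 0 -> qN x != 0.
Proof. by move=> hx; apply/eqP => /qN_eq0 h; rewrite h eqxx in hx. Qed.

Lemma qmulV g : g != 0 -> g * qinv g = 1.
Proof.
move=> /qN_neq0; case: g => a b c d; rewrite /qN /= => h.
rewrite -[_ * _]/(qmul _ _) /qmul /qinv /=.
rewrite -[1]/(Quat 1 0 0 0); congr Quat; field; exact: h.
Qed.
Lemma qVmul g : g != 0 -> qinv g * g = 1.
Proof.
move=> /qN_neq0; case: g => a b c d; rewrite /qN /= => h.
rewrite -[_ * _]/(qmul _ _) /qmul /qinv /=.
rewrite -[1]/(Quat 1 0 0 0); congr Quat; field; exact: h.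
Qed.

Lemma qNM x y : qN (x * y) = qN x * qN y.
Proof. case: x => a b c d; case: y => e f g h. rewrite /qN -[Quat _ _ _ _ * _]/(qmul _ _) /qmul /=. ring. Qed.

Lemma qclass_inv q y : qclass q y -> qa y = qa q /\ qN y = qN q.
Proof.
case=> g hg ->; split.
  move: hg => /qN_neq0; case: g => a b c d; case: q => e f g' h; rewrite /qN /= => hn.
  field; exact: hn.
rewrite !qNM; move: hg => /qN_neq0; case: g => a b c d; rewrite /qN /qinv /= => hn.
field; exact: hn.
Qed.

Lemma qclass_of_eq q x g : g != 0 -> g * q = x * g -> qclass q x.
Proof.
move=> hg h; exists g => //; by rewrite h -mulrA qmulV // mulr1.
Qed.

Lemma qclass_build z x : complex.Im z != 0 ->
  qa x = complex.Re z -> qN x = cN z -> qclass (qofC z) x.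
Proof.
case: z => al be /=; case: x => a x1 x2 x3 /= hb -> ; rewrite /qN /cN /= => hN.
have hs : x1 ^+ 2 + x2 ^+ 2 + x3 ^+ 2 = be ^+ 2.
  by apply: (addrI (al ^+ 2)); rewrite -hN; ring.
have [hz|hz] := eqVneq (Quat (be ^+ 2 + x1 * be) 0 (- (x3 * be)) (x2 * be)) 0.
  case: hz => h1 h2 h3.
  have e3 : x3 = 0 by move/eqP: h2; rewrite oppr_eq0 mulf_eq0 (negbTE hb) orbF => /eqP.
  have e2 : x2 = 0 by move/eqP: h3; rewrite mulf_eq0 (negbTE hb) orbF => /eqP.
  have e1 : x1 = - be.
    have : (be + x1) * be = 0 by rewrite -h1; ring.
    by move/eqP; rewrite mulf_eq0 (negbTE hb) orbF addrC addr_eq0 => /eqP.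
  subst; apply: (@qclass_of_eq _ _ (qj R)); first by apply/eqP => -[/eqP]; rewrite oner_eq0.
  rewrite -[_ * _]/(qmul _ _) -[Quat _ _ _ _ * _]/(qmul _ _) /qmul /=; congr Quat; ring.
apply: (qclass_of_eq hz).
rewrite -[_ * _]/(qmul _ _) -[Quat _ _ _ _ * _]/(qmul _ _) /qmul /=; congr Quat; try ring.
apply/eqP; rewrite -subr_eq0; apply/eqP.
transitivity (be * (be ^+ 2 - (x1 ^+ 2 + x2 ^+ 2 + x3 ^+ 2))); first ring.
by rewrite hs subrr mulr0.
Qed.
End Cls.


Lemma omega_alg (K : fieldType) (e eb P1 P1b P2 P2b Q1 Q1b Q2 Q2b : K) :
  let F1 := P1 * e + Q1 in let F1b := P1b * eb + Q1b in
  let F2 := P2 * e + Q2 in let F2b := P2b * eb + Q2b in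
  let D := F1 * F1b + F2 * F2b in
  D != 0 ->
  F1b * (P1 * eb + Q1) + F2b * (P2 * eb + Q2) = 0 ->
  let X1 := D^-1 * (F2 * F2b * e + F1 * F1b * eb) in
  let X1b := D^-1 * (F2 * F2b * eb + F1 * F1b * e) in
  let X2 := - (D^-1 * (F2 * F1b * (e - eb))) in
  let X2b := - (D^-1 * (F2b * F1 * (eb - e))) in
  [/\ P1 * X1 - P2 * X2b + Q1 = 0, P1 * X2 + P2 * X1b + Q2 = 0,
      X1 + X1b = e + eb & X1 * X1b + X2 * X2b = e * eb].
Proof.
move=> F1 F1b F2 F2b D hD hc X1 X1b X2 X2b.
split.
- transitivity (D^-1 * (F1 * (F1b * (P1 * eb + Q1) + F2b * (P2 * eb + Q2)))).
    rewrite /X1 /X2b /D /F1 /F1b /F2 /F2b. field. exact: hD.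
  by rewrite hc mulr0 mulr0.
- transitivity (D^-1 * (F2 * (F1b * (P1 * eb + Q1) + F2b * (P2 * eb + Q2)))).
    rewrite /X2 /X1b /D /F1 /F1b /F2 /F2b. field. exact: hD.
  by rewrite hc mulr0 mulr0.
- rewrite /X1 /X1b /D /F1 /F1b /F2 /F2b. field. exact: hD.
- rewrite /X1 /X1b /X2 /X2b /D /F1 /F1b /F2 /F2b. field. exact: hD.
Qed.

Lemma root_alg (K : comNzRingType) (w X1 X1b X2 X2b P1 P1b P2 P2b Q1 Q1b Q2 Q2b s t : K) :
  P1 * X1 - P2 * X2b + Q1 = 0 -> P1b * X1b - P2b * X2 + Q1b = 0 ->
  P1 * X2 + P2 * X1b + Q2 = 0 -> P1b * X2b + P2b * X1 + Q2b = 0 ->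
  X1 + X1b = s -> X1 * X1b + X2 * X2b = t -> w * w = s * w - t ->
  (P1 * w + Q1) * (P1b * w + Q1b) + (P2 * w + Q2) * (P2b * w + Q2b) = 0.
Proof.
move=> h1 h2 h3 h4 hs ht hw.
have e1 : Q1 = 0 - (P1 * X1 - P2 * X2b) by rewrite -h1; ring.
have e2 : Q1b = 0 - (P1b * X1b - P2b * X2) by rewrite -h2; ring.
have e3 : Q2 = 0 - (P1 * X2 + P2 * X1b) by rewrite -h3; ring.
have e4 : Q2b = 0 - (P1b * X2b + P2b * X1) by rewrite -h4; ring.
transitivity ((P1 * P1b + P2 * P2b) * (w * w - (X1 + X1b) * w + (X1 * X1b + X2 * X2b))).
  rewrite e1 e2 e3 e4; ring.
rewrite hs ht hw; ring.
Qed.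


Section Inv.
Variable R : rcfType.
Local Notation H := (quat R).
Local Notation C := (R[i]).
Implicit Types (x y g q : H) (z u v w : C).

Lemma cjD u v : conjc (u + v) = conjc u + conjc v. Proof. exact: rmorphD. Qed.
Lemma cjB u v : conjc (u - v) = conjc u - conjc v. Proof. exact: rmorphB. Qed.
Lemma cjM u v : conjc (u * v) = conjc u * conjc v. Proof. exact: rmorphM. Qed.
Lemma cjN u : conjc (- u) = - conjc u. Proof. exact: rmorphN. Qed.
Lemma cjV u : conjc (u^-1) = (conjc u)^-1. Proof. exact: fmorphV. Qed.
Lemma cj0 : conjc (0 : C) = 0. Proof. exact: rmorph0. Qed.
Lemma cj2 : conjc (2 : C) = 2. Proof. exact: rmorph_nat. Qed.
Lemma cji : conjc ('i : C) = - 'i. Proof. by apply/eqP; rewrite eq_complex /= oppr0 !eqxx. Qed.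
Definition cjE := (cjD, cjB, cjM, cjN, cjV, cj0, cj2, conjc_real, conjcK).

Lemma qa_qofC z : qa (qofC z) = complex.Re z. Proof. by case: z. Qed.
Lemma qN_qofC z : qN (qofC z) = cN z.
Proof. case: z => a b; rewrite /qN /cN /=; ring. Qed.
Lemma inv_re x : qt1 x + conjc (qt1 x) = (2 * qa x)%:C.
Proof. case: x => a b c d /=; simpc; rewrite /=; congr Complex; ring. Qed.
Lemma inv_N x : qt1 x * conjc (qt1 x) + qt2 x * conjc (qt2 x) = (qN x)%:C.
Proof. case: x => a b c d; rewrite /qN /=; simpc; rewrite /=; congr Complex; ring. Qed.
Lemma cN_C z : (cN z)%:C = z * conjc z.
Proof. case: z => a b; rewrite /cN /=; simpc; rewrite /=; congr Complex; ring. Qed.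
Lemma re_C z : (2 * complex.Re z)%:C = z + conjc z.
Proof. case: z => a b /=; simpc; rewrite /=; congr Complex; ring. Qed.
Lemma qa_qofCJ z : qa (qofC (conjc z)) = complex.Re z. Proof. by case: z. Qed.
Lemma qN_qofCJ z : qN (qofC (conjc z)) = cN z. Proof. case: z => a b; rewrite /qN /cN /=; ring. Qed.
Lemma Re_conj z : complex.Re (conjc z) = complex.Re z. Proof. by case: z. Qed.
Lemma Im_conj z : complex.Im (conjc z) = - complex.Im z. Proof. by case: z. Qed.
Lemma cN_conj z : cN (conjc z) = cN z.
Proof. case: z => a b; rewrite /cN /=; ring. Qed.
Lemma quad_conj z : conjc z * conjc z = (2 * complex.Re z)%:C * conjc z - (cN z)%:C.
Proof. by rewrite -cjM csq_quad !cjE. Qed.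

Lemma csq_sum0 u v : u * conjc u + v * conjc v = 0 -> u = 0 /\ v = 0.
Proof.
rewrite -!cN_C -rmorphD /= => /eqP; rewrite -(rmorph0 (real_complex R)) => /eqP /complexI.
move: u v => [a b] [c d]; rewrite /cN /= => /eqP.
rewrite !paddr_eq0 ?addr_ge0 ?sqr_ge0 // !sqrf_eq0 => /andP[/andP[/eqP-> /eqP->] /andP[/eqP-> /eqP->]].
by [].
Qed.

Lemma sub_conj_neq0 z : complex.Im z != 0 -> z - conjc z != 0.
Proof.
move=> h; rewrite subcJ !mulf_eq0 negb_or; apply/andP; split.
  rewrite negb_or; apply/andP; split; first by rewrite pnatr_eq0.
  by apply/eqP => /(congr1 (@complex.Re R)) /= /eqP; rewrite (negbTE h).
by apply/eqP => /(congr1 (@complex.Im R)) /= /eqP; rewrite oner_eq0.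
Qed.

Lemma same_inv (e e' : C) : complex.Re e = complex.Re e' -> cN e = cN e' -> e' = e \/ e' = conjc e.
Proof.
move: e e' => [a b] [a' b'] /= <-; rewrite /cN /= => h.
have : b' ^+ 2 == b ^+ 2 by apply/eqP; apply: (addrI (a ^+ 2)); rewrite h.
by rewrite eqf_sqr => /orP[/eqP->|/eqP->]; [left|right].
Qed.

Lemma qinv_neq0 g : g != 0 -> qinv g != 0.
Proof.
move=> hg; apply/eqP => h; have := qVmul hg; rewrite h mul0r => /eqP.
by rewrite eq_sym oner_eq0.
Qed.
Lemma inv_uniq g (u : H) : g != 0 -> u * g = 1 -> u = qinv g.
Proof. by move=> hg h; rewrite -[u]mulr1 -(qmulV hg) mulrA h mul1r. Qed.
Lemma qinvK g : g != 0 -> qinv (qinv g) = g.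
Proof. by move=> hg; apply/esym/inv_uniq; [exact: qinv_neq0 | exact: qmulV]. Qed.
Lemma qmul_neq0 g h : g != 0 -> h != 0 -> g * h != 0.
Proof.
move=> hg hh; apply/eqP => e; have := qNM g h; rewrite e.
have -> : qN (0 : H) = 0 by rewrite /qN /=; ring.
move/esym/eqP; rewrite mulf_eq0 (negbTE (qN_neq0 hg)) (negbTE (qN_neq0 hh)) //.
Qed.
Lemma qinvM g h : g != 0 -> h != 0 -> qinv (h * g) = qinv g * qinv h.
Proof.
move=> hg hh; apply/esym/inv_uniq; first exact: qmul_neq0.
by rewrite -mulrA (mulrA (qinv h)) qVmul // mul1r qVmul.
Qed.
Lemma qclass_sym q x : qclass q x -> qclass x q.
Proof.
case=> g hg ->; exists (qinv g); first exact: qinv_neq0.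
by rewrite qinvK // !mulrA qVmul // mul1r -mulrA qVmul // mulr1.
Qed.
Lemma qclass_trans q x y : qclass q x -> qclass x y -> qclass q y.
Proof.
case=> g hg -> [h hh ->]; exists (h * g); first exact: qmul_neq0.
by rewrite qinvM // !mulrA.
Qed.
Lemma qclass_refl q : qclass q q.
Proof. by exists 1; rewrite ?oner_eq0 // mul1r -(inv_uniq (oner_neq0 H) (mulr1 1)) mulr1. Qed.

Definition qs x := qb x ^+ 2 + qc x ^+ 2 + qd x ^+ 2.

Lemma class_iff_gen q x : qs q != 0 -> (qclass q x <-> qa x = qa q /\ qN x = qN q).
Proof.
move=> hq; split; first exact: qclass_inv.
move=> [h1 h2].
pose z := Complex (qa q) (Num.sqrt (qs q)).
have hs : 0 <= qs q by rewrite /qs !addr_ge0 ?sqr_ge0.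
have hz : complex.Im z != 0.
  by rewrite /= gt_eqF // sqrtr_gt0 lt_def hq hs.
have hNz : cN z = qN q by rewrite /cN /= sqr_sqrtr // /qN /qs; ring.
have c1 : qclass (qofC z) q by apply: qclass_build.
have c2 : qclass (qofC z) x by apply: qclass_build; rewrite ?h1 ?h2.
exact: qclass_trans (qclass_sym c1) c2.
Qed.

Lemma class_iff z x : complex.Im z != 0 ->
  (qclass (qofC z) x <-> qa x = complex.Re z /\ qN x = cN z).
Proof.
move=> hz; rewrite class_iff_gen ?qa_qofC ?qN_qofC //.
by case: z hz => a b /= hb; rewrite /qs /= expr0n /= !addr0 sqrf_eq0.
Qed.
End Inv.


Section Main.
Variable R : rcfType.
Local Notation H := (quat R).
Local Notation C := (R[i]).
Implicit Types (x y g q : H) (z u v w e : C).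
Variables (n : nat) (p : nat -> H) (d0 : R).
Local Notation c := (qcoefs p d0).
Local Notation PP := (Pq n p d0).
Local Notation QQ := (Qq n p d0).

Lemma qzeroE x : qzero_of n c x <-> PP (qa x) (qN x) * x + QQ (qa x) (qN x) = 0.
Proof. by rewrite /qzero_of qhornerE. Qed.

Lemma pq_eq (P Q x : H) : P * x + Q =
  q2 (qt1 P * qt1 x - qt2 P * conjc (qt2 x) + qt1 Q) (qt1 P * qt2 x + qt2 P * conjc (qt1 x) + qt2 Q).
Proof. by rewrite {1}[P]q2E {1}[x]q2E {1}[Q]q2E q2M q2D. Qed.

Lemma pt_eq a N w : PP a N * qofC w + QQ a N =
  q2 (qt1 (PP a N) * w + qt1 (QQ a N)) (qt2 (PP a N) * conjc w + qt2 (QQ a N)).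
Proof.
rewrite [PP a N]q2E [QQ a N]q2E qofC_q2 q2M q2D !qt1_q2 !qt2_q2 cj0.
congr q2; ring.
Qed.

Lemma zero_root x w : qzero_of n c x ->
  w * w = (2 * qa x)%:C * w - (qN x)%:C -> root (ptilde n p d0) w.
Proof.
move=> /qzeroE hx hw; rewrite /root (ptildeE n p d0 hw).
move: hx; rewrite pq_eq => /q2_eq0 [h1 h3].
have h2 := congr1 conjc h1; have h4 := congr1 conjc h3; rewrite !cjE in h2 h4.
apply/eqP; exact: (root_alg h1 h2 h3 h4 (inv_re x) (inv_N x) hw).
Qed.

Lemma lin0 P Q e : complex.Im e != 0 -> P * e + Q = 0 -> P * conjc e + Q = 0 -> P = 0 /\ Q = 0.
Proof.
move=> he h1 h2.
have : P * (e - conjc e) = 0.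
  transitivity ((P * e + Q) - (P * conjc e + Q)); first ring.
  by rewrite h1 h2 subrr.
move/eqP; rewrite mulf_eq0 (negbTE (sub_conj_neq0 he)) orbF => /eqP hP.
by split => //; move: h1; rewrite hP mul0r add0r.
Qed.

Lemma inT1_iff e : complex.Im e != 0 ->
  (inT1 n p d0 e <-> PP (complex.Re e) (cN e) = 0 /\ QQ (complex.Re e) (cN e) = 0).
Proof.
move=> he; have hq := csq_quad e; split.
  case; rewrite (f1E n p d0 hq) (f2E n p d0 hq) (f1barE n p d0 hq) (f2barE n p d0 hq).
  move=> h1 h2 /(congr1 conjc) h3 /(congr1 conjc) h4; rewrite !cjE in h3 h4.
  have [e1 e2] := lin0 he h1 h3; have [e3 e4] := lin0 he h2 h4.
  by rewrite [PP _ _]q2E [QQ _ _]q2E e1 e2 e3 e4.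
move=> [hP hQ]; split;
  by rewrite ?(f1E n p d0 hq) ?(f2E n p d0 hq) ?(f1barE n p d0 hq) ?(f2barE n p d0 hq) hP hQ
     ?qt10 ?qt20 ?cj0 mul0r addr0.
Qed.

Lemma zeros_T1 e : complex.Im e != 0 -> qzero_of n c (qofC e) ->
  qzero_of n c (qofC (conjc e)) -> inT1 n p d0 e.
Proof.
move=> he /qzeroE h1 /qzeroE h2; apply/inT1_iff => //.
rewrite ?qa_qofCJ ?qN_qofCJ ?qa_qofC ?qN_qofC !pt_eq ?conjcK in h1 h2.
case/q2_eq0: h1 => a1 a2; case/q2_eq0: h2 => b1 b2.
have [e1 e2] := lin0 he a1 b1.
have he' : complex.Im (conjc e) != 0 by case: (e) he => a b /=; rewrite oppr_eq0.
have b2' : qt2 (PP (complex.Re e) (cN e)) * conjc (conjc e) + qt2 (QQ (complex.Re e) (cN e)) = 0 by rewrite conjcK.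
have [e3 e4] := lin0 he' a2 b2'.
by rewrite [PP _ _]q2E [QQ _ _]q2E e1 e2 e3 e4.
Qed.
End Main.


Section Om.
Variable R : rcfType.
Local Notation H := (quat R).
Local Notation C := (R[i]).
Implicit Types (x y g q : H) (z u v w e : C).
Variables (n : nat) (p : nat -> H) (d0 : R).
Local Notation c := (qcoefs p d0).
Local Notation PP := (Pq n p d0).
Local Notation QQ := (Qq n p d0).

Definition omega1 e : H :=
  let F1 := (f1 n p d0).[e] in let F2 := (f2 n p).[e] in
  let imeta : C := Complex (complex.Im e) 0 in let two : C := 2 in
  qofC ((csq F1 + csq F2)^-1 * (csq F2 * e + csq F1 * conjc e))
  - qofC ((csq F1 + csq F2)^-1 * (two * F2 * conjc F1 * imeta)) * qk R.

Lemma subcJ' z : 2 * (complex.Im z)%:C * 'i = z - conjc z.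
Proof. exact: (esym (subcJ z)). Qed.

Lemma om_q2 u v : qofC u - qofC v * qk R = q2 u (- (v * 'i)).
Proof. rewrite !qofC_q2 qk_q2 q2M q2B !cjE; congr q2; first by rewrite mulr0 mul0r subrr subr0.
by rewrite mul0r addr0 sub0r. Qed.

Lemma omega1_ok e : complex.Im e != 0 -> root (ptilde n p d0) e ->
  csq (f1 n p d0).[e] + csq (f2 n p).[e] != 0 ->
  [/\ qa (omega1 e) = complex.Re e, qN (omega1 e) = cN e & qzero_of n c (omega1 e)].
Proof.
move=> he hr hD; have hq := csq_quad e.
rewrite /root (ptildeE n p d0 hq) in hr.
move/eqP/(congr1 conjc): hr; rewrite !cjE => hr.
rewrite /omega1 om_q2.
rewrite (f1E n p d0 hq) (f2E n p d0 hq) in hD *.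
rewrite /csq !cjE in hD *.
rewrite -[Complex (complex.Im e) 0]/((complex.Im e)%:C).
set P1 := qt1 (PP _ _) in hD hr *; set P2 := qt2 (PP _ _) in hD hr *.
set Q1 := qt1 (QQ _ _) in hD hr *; set Q2 := qt2 (QQ _ _) in hD hr *.
case: (omega_alg hD hr) => h1 h2 h3 h4.
pose F1 := P1 * e + Q1; pose F1b := conjc P1 * conjc e + conjc Q1.
pose F2 := P2 * e + Q2; pose F2b := conjc P2 * conjc e + conjc Q2.
pose D := F1 * F1b + F2 * F2b.
pose X1 := D^-1 * (F2 * F2b * e + F1 * F1b * conjc e).
pose X1b := D^-1 * (F2 * F2b * conjc e + F1 * F1b * e).
pose X2 := - (D^-1 * (F2 * F1b * (e - conjc e))).
pose X2b := - (D^-1 * (F2b * F1 * (conjc e - e))).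
have h1' : P1 * X1 - P2 * X2b + Q1 = 0 := h1.
have h2' : P1 * X2 + P2 * X1b + Q2 = 0 := h2.
have h3' : X1 + X1b = e + conjc e := h3.
have h4' : X1 * X1b + X2 * X2b = e * conjc e := h4.
have hD' : D != 0 := hD.
have -> : - (D^-1 * (2 * F2 * F1b * (complex.Im e)%:C) * 'i) = X2.
  by rewrite /X2 -subcJ'; ring.
rewrite -/D -/X1.
have eD : conjc D = D by rewrite /D /F1 /F1b /F2 /F2b !cjE; ring.
have cX1 : conjc X1 = X1b.
  by rewrite /X1 cjM cjV eD /X1b /F1 /F1b /F2 /F2b !cjE; ring.
have cX2 : conjc X2 = X2b.
  by rewrite /X2 cjN cjM cjV eD /X2b /F1 /F1b /F2 /F2b !cjE; ring.
have ha : qa (q2 X1 X2) = complex.Re e.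
  have : (2 * complex.Re X1)%:C = (2 * complex.Re e)%:C by rewrite !re_C cX1 h3'.
  move/complexI/mulfI; apply; by rewrite pnatr_eq0.
have hb : qN (q2 X1 X2) = cN e.
  apply: complexI; rewrite -inv_N qt1_q2 qt2_q2 cX1 cX2 h4' cN_C //.
split => //.
rewrite qzeroE ha hb pq_eq qt1_q2 qt2_q2 cX1 cX2 -/P1 -/P2 -/Q1 -/Q2 h1' h2'.
exact: q20.
Qed.

Lemma qofCN z : qofC (- z) = - qofC z. Proof. by rewrite !qofC_q2 q2N oppr0. Qed.

Lemma omega_cases e : omega n p d0 e =
  if csq (f1 n p d0).[e] + csq (f2 n p).[e] != 0 then omega1 e else omega1 (conjc e).
Proof.
rewrite /omega /omega1; cbv zeta; case: ifP => // _.
rewrite conjcK.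
have hI : Complex (complex.Im (conjc e)) 0 = - Complex (complex.Im e) 0.
  by case: (e) => a b; apply/eqP; rewrite eq_complex /= oppr0 !eqxx.
rewrite hI !mulrN qofCN mulNr opprK.
by congr (qofC (_ * _) + _); rewrite addrC.
Qed.

Lemma f1bar_conj e : (f1bar n p d0).[e] = conjc (f1 n p d0).[conjc e].
Proof.
rewrite (f1barE n p d0 (csq_quad e)) (f1E n p d0 (quad_conj e)).
by rewrite !cjE.
Qed.
Lemma f2bar_conj e : (f2bar n p).[e] = conjc (f2 n p).[conjc e].
Proof.
rewrite (f2barE n p d0 (csq_quad e)) (f2E n p d0 (quad_conj e)).
by rewrite !cjE.
Qed.
Lemma ptilde_conj e : (ptilde n p d0).[conjc e] = conjc (ptilde n p d0).[e].
Proof.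
rewrite (ptildeE n p d0 (csq_quad e)) (ptildeE n p d0 (quad_conj e)) !cjE.
by rewrite [X in X + _ = _]mulrC [X in _ + X = _]mulrC.
Qed.

Lemma omega_ok e : complex.Im e != 0 -> root (ptilde n p d0) e -> ~ inT1 n p d0 e ->
  [/\ qa (omega n p d0 e) = complex.Re e, qN (omega n p d0 e) = cN e &
      qzero_of n c (omega n p d0 e)].
Proof.
move=> he hr hT; rewrite omega_cases; case: ifP => hD; first exact: omega1_ok.
move/negbFE/eqP: hD; rewrite /csq => /csq_sum0 [e1 e2].
have hD' : csq (f1 n p d0).[conjc e] + csq (f2 n p).[conjc e] != 0.
  apply/negP => /eqP; rewrite /csq => /csq_sum0 [g1 g2]; apply: hT.
  by split; rewrite ?f1bar_conj ?f2bar_conj ?e1 ?e2 ?g1 ?g2 ?cj0.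
have he' : complex.Im (conjc e) != 0 by case: (e) he => a b /=; rewrite oppr_eq0.
have hr' : root (ptilde n p d0) (conjc e) by rewrite /root ptilde_conj (eqP hr) cj0.
case: (omega1_ok he' hr' hD').
have -> : complex.Re (conjc e) = complex.Re e by case: (e).
have -> : cN (conjc e) = cN e by case: (e) => a b; rewrite /cN /=; ring.
by [].
Qed.

Lemma zero_unique x y : qzero_of n c x -> qzero_of n c y -> qa x = qa y -> qN x = qN y ->
  PP (qa x) (qN x) != 0 -> x = y.
Proof.
move=> /qzeroE hx /qzeroE hy ha hN hP.
rewrite -ha -hN in hy.
have h : PP (qa x) (qN x) * (x - y) = 0.
  rewrite mulrBr; apply/eqP; rewrite subr_eq0; apply/eqP.
  by apply: (addIr (QQ (qa x) (qN x))); rewrite hx hy.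
apply/eqP; rewrite -subr_eq0; apply/eqP.
by rewrite -[x - y]mul1r -(qVmul hP) -mulrA h mulr0.
Qed.
End Om.


Section Fin.
Variable R : rcfType.
Local Notation H := (quat R).
Local Notation C := (R[i]).
Implicit Types (x y g q : H) (z u v w e : C).
Variables (n : nat) (p : nat -> H) (d0 : R) (S : seq C).
Local Notation c := (qcoefs p d0).
Local Notation PP := (Pq n p d0).
Local Notation QQ := (Qq n p d0).
Hypothesis hreps : nonreal_reps (ptilde n p d0) S.

Lemma S_root e : e \in S -> root (ptilde n p d0) e /\ complex.Im e != 0.
Proof. by case: hreps => _ h _ _ /h. Qed.

Lemma S_eq e e' : e \in S -> e' \in S -> complex.Re e = complex.Re e' -> cN e = cN e' -> e = e'.
Proof.
move=> he he' h1 h2; case: (same_inv h1 h2) => // h.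
by case: hreps => _ _ /(_ _ he); rewrite -h he'.
Qed.

Lemma qs_of x : qs x = qN x - qa x ^+ 2.
Proof. by rewrite /qs /qN; ring. Qed.

Lemma Im_sq e : cN e - complex.Re e ^+ 2 = complex.Im e ^+ 2.
Proof. by rewrite /cN; ring. Qed.

Lemma sphere_zero e x : complex.Im e != 0 -> inT1 n p d0 e -> qclass (qofC e) x -> qzero_of n c x.
Proof.
move=> hI hT /(class_iff _ hI) [h1 h2].
case/(inT1_iff n p d0 hI): hT => hP hQ.
by apply/qzeroE; rewrite h1 h2 hP hQ mul0r addr0.
Qed.

Lemma real_zero xi : root (ptilde n p d0) (xi%:C) -> qzero_of n c (Quat xi 0 0 0).
Proof.
move=> hr.
have -> : Quat xi 0 0 0 = qofC (xi%:C) by [].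
have hw : conjc (xi%:C) = xi%:C := conjc_real xi.
have hq := csq_quad (xi%:C).
move: hr; rewrite /root (ptildeE n p d0 hq) => /eqP hr.
apply/qzeroE; rewrite qa_qofC qN_qofC pt_eq.
set P1 := qt1 _; set P2 := qt2 _; set Q1 := qt1 _; set Q2 := qt2 _.
have : (P1 * xi%:C + Q1) * conjc (P1 * xi%:C + Q1) + (P2 * xi%:C + Q2) * conjc (P2 * xi%:C + Q2) = 0.
  rewrite !cjE ?hw; exact: hr.
case/csq_sum0 => -> e2; rewrite hw e2; exact: q20.
Qed.

Lemma real_case x : qzero_of n c x -> qs x = 0 ->
  x = Quat (qa x) 0 0 0 /\ root (ptilde n p d0) ((qa x)%:C).
Proof.
case: x => a b c1 d; rewrite /qs /= => hz /eqP.
rewrite !paddr_eq0 ?addr_ge0 ?sqr_ge0 // !sqrf_eq0 => /andP[/andP[/eqP eb /eqP ec] /eqP ed].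
subst; split => //.
apply: (zero_root hz).
have := csq_quad (a%:C); rewrite /cN /qN /=.
by rewrite expr0n /= !addr0.
Qed.

Lemma nonreal_case x : qzero_of n c x -> qs x != 0 ->
  exists2 e, e \in S & qclass (qofC e) x.
Proof.
move=> hz hs.
have hs0 : 0 <= qs x by rewrite /qs !addr_ge0 ?sqr_ge0.
pose z := Complex (qa x) (Num.sqrt (qs x)).
have hI : complex.Im z != 0 by rewrite /= gt_eqF // sqrtr_gt0 lt_def hs hs0.
have hNz : cN z = qN x by rewrite /cN /= sqr_sqrtr // qs_of; ring.
have hr : root (ptilde n p d0) z.
  apply: (zero_root hz); have := csq_quad z; by rewrite hNz.
case: hreps => _ _ _ /(_ _ hr hI) [hzS|hzS].
  by exists z => //; apply/(class_iff _ hI); split.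
exists (conjc z) => //.
have hI' : complex.Im (conjc z) != 0 by rewrite /= oppr_eq0.
apply/(class_iff _ hI'); split => //.
by rewrite /cN /= sqrrN.
Qed.

Lemma omega_inv e : e \in S -> ~ inT1 n p d0 e ->
  [/\ qa (omega n p d0 e) = complex.Re e, qN (omega n p d0 e) = cN e &
      qzero_of n c (omega n p d0 e)].
Proof. by move=> /S_root [hr hI]; apply: omega_ok. Qed.

Lemma omega_not_sph e : e \in S -> ~ inT1 n p d0 e -> ~ spherical_zero n c (omega n p d0 e).
Proof.
move=> he hT [_ hall]; have [hr hI] := S_root he.
have [h1 h2 _] := omega_inv he hT.
have hs : qs (omega n p d0 e) != 0.
  by rewrite qs_of h1 h2 Im_sq sqrf_eq0.
apply: hT; apply: (zeros_T1 hI).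
  apply: hall; apply/(class_iff_gen _ hs); by rewrite qa_qofC qN_qofC.
apply: hall; apply/(class_iff_gen _ hs); by rewrite qa_qofCJ qN_qofCJ.
Qed.
End Fin.

Unset Implicit Arguments.
Local Close Scope complex_scope.

Theorem theorem1 (R : rcfType) (n : nat) (p : nat -> quat R) (d0 : R)
    (S : seq R[i]) :
  (0 < n)%N -> p n != 0 -> (d0 = 0 \/ d0 = 1) ->
  nonreal_reps (ptilde n p d0) S ->
  (forall x : quat R, qzero_of n (qcoefs p d0) x <->
     part_real n p d0 x \/ part_omega n p d0 S x \/ part_sphere n p d0 S x)
  /\ (forall x, part_real n p d0 x -> ~ part_omega n p d0 S x)
  /\ (forall x, part_real n p d0 x -> ~ part_sphere n p d0 S x)
  /\ (forall x, part_omega n p d0 S x -> ~ part_sphere n p d0 S x)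
  /\ (forall e e', e \in S -> e' \in S -> ~ inT1 n p d0 e -> ~ inT1 n p d0 e' ->
        omega n p d0 e = omega n p d0 e' -> e = e')
  /\ (forall e e' x, e \in S -> e' \in S -> inT1 n p d0 e -> inT1 n p d0 e' ->
        qclass (qofC e) x -> qclass (qofC e') x -> e = e')
  /\ (forall x : quat R, isolated_zero n (qcoefs p d0) x <->
        part_real n p d0 x \/ part_omega n p d0 S x)
  /\ (forall x : quat R, spherical_zero n (qcoefs p d0) x <->
        part_sphere n p d0 S x).
Proof.
move=> _ _ _ hreps.
have Sroot := S_root hreps.
have main : forall x : quat R, qzero_of n (qcoefs p d0) x <->
     part_real n p d0 x \/ part_omega n p d0 S x \/ part_sphere n p d0 S x.
  move=> x; split.
    move=> hz; have [hs|hs] := eqVneq (qs x) 0.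
      have [ex hr] := real_case hz hs; left; by exists (qa x).
    have [e he hc] := nonreal_case hreps hz hs.
    have [hr hI] := Sroot _ he.
    case: (classic (inT1 n p d0 e)) => hT'.
      by right; right; exists e => //; split.
    right; left; exists e => //; split => //.
    have [h1 h2 h3] := omega_inv hreps he hT'.
    case/(class_iff _ hI): hc => k1 k2.
    apply: (zero_unique hz h3); rewrite ?h1 ?h2 ?k1 ?k2 //.
    apply/eqP => hP; apply: hT'; apply/(inT1_iff n p d0 hI); split => //.
    by move/qzeroE: hz; rewrite k1 k2 hP mul0r add0r.
  case=> [[xi [hr ->]]|[[e he [hT ->]]|[e he [hT hc]]]].
  - exact: real_zero.
  - by case: (omega_inv hreps he hT).
  - by have [_ hI] := Sroot _ he; exact: sphere_zero hI hT hc.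
have inv_sph : forall e x, e \in S -> qclass (qofC e) x -> qa x = complex.Re e /\ qN x = cN e.
  by move=> e x he; have [_ hI] := Sroot _ he; move/(class_iff _ hI).
have noreal : forall e x, e \in S -> qa x = complex.Re e -> qN x = cN e -> qs x != 0.
  move=> e x he h1 h2; have [_ hI] := Sroot _ he.
  by rewrite qs_of h1 h2 Im_sq sqrf_eq0.
have qs_real : forall xi : R, qs (Quat xi 0 0 0) = 0.
  by move=> xi; rewrite /qs /= expr0n /= !addr0.
have sph_iff : forall x : quat R, spherical_zero n (qcoefs p d0) x <-> part_sphere n p d0 S x.
  move=> x; split.
    move=> hsph; have hz : qzero_of n (qcoefs p d0) x by case: hsph => _ /(_ x (qclass_refl x)).
    case/main: hz => [[xi [_ hx]]|[[e he [hT hx]]|//]].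
      by exfalso; case: hsph => hnr _; apply: hnr; rewrite hx; split.
    by exfalso; rewrite hx in hsph; exact: (omega_not_sph hreps he hT hsph).
  case=> e he [hT hc]; have [_ hI] := Sroot _ he.
  have [k1 k2] := inv_sph _ _ he hc.
  split.
    move=> [hb hc' hd]; move: (noreal _ _ he k1 k2); rewrite /qs hb hc' hd expr0n /= !addr0.
    by rewrite eqxx.
  move=> w /qclass_inv [w1 w2]; apply: (sphere_zero hI hT).
  by apply/(class_iff _ hI); rewrite w1 w2.
split; first exact: main.
split.
  move=> x [xi [_ ->]] [e he [hT hx]].
  have [h1 h2 _] := omega_inv hreps he hT.
  by move: (noreal _ _ he h1 h2); rewrite -hx qs_real eqxx.
split.
  move=> x [xi [_ ->]] [e he [_ hc]].
  have [k1 k2] := inv_sph _ _ he hc.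
  by move: (noreal _ _ he k1 k2); rewrite qs_real eqxx.
split.
  move=> x [e he [hT ->]] [e' he' [hT' hc]].
  have [k1 k2] := inv_sph _ _ he' hc.
  have [h1 h2 _] := omega_inv hreps he hT.
  have ee : e = e' by apply: (S_eq hreps he he'); [rewrite -h1 k1 | rewrite -h2 k2].
  by apply: hT; rewrite ee.
split.
  move=> e e' he he' hT hT' hom.
  have [h1 h2 _] := omega_inv hreps he hT.
  have [h1' h2' _] := omega_inv hreps he' hT'.
  by apply: (S_eq hreps he he'); [rewrite -h1 -h1' hom | rewrite -h2 -h2' hom].
split.
  move=> e e' x he he' _ _ hc hc'.
  have [k1 k2] := inv_sph _ _ he hc; have [k1' k2'] := inv_sph _ _ he' hc'.
  by apply: (S_eq hreps he he'); [rewrite -k1 -k1' | rewrite -k2 -k2'].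
split; last exact: sph_iff.
move=> x; split.
  case=> /main [h|[h|h]] hns; [by left|by right|].
  by exfalso; apply: hns; apply/sph_iff.
case=> [hr|[e he [hT hx]]]; split; first by apply/main; left.
- case=> hnr _; apply: hnr; case: hr => xi [_ ->]; by [].
- by apply/main; right; left; exists e.
- by rewrite hx; exact: (omega_not_sph hreps he hT).
Qed.
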